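(* Let $d\ge2$ and $p=(\sqrt d+1)^{-1}$, and consider $\mathcal{C}_{\mathrm{PP}},\mathcal{C}_{\mathrm{s}}$ with this $p$ and $\mathcal{C}_{\mathrm{q}}$ (all with variance constant $\omega=\sqrt d$). For a symmetric positive definite $M$ and a random vector $E$ with $\mathbb{E}[EE^\top]=M$ independent of the compression randomness, let $\mathfrak{C}(\mathcal{C},M):=\mathbb{E}[\mathcal{C}(E)\mathcal{C}(E)^\top]$ for $\mathcal{C}\in\{\mathcal{C}_{\mathrm{PP}},\mathcal{C}_{\mathrm{s}}\}$, and $\widetilde{\mathfrak{C}}(\mathcal{C}_{\mathrm{q}},M):=M+\sqrt{\mathrm{Tr}(M)}\sqrt{\mathrm{Diag}(M)}-\mathrm{Diag}(M)$. (1) If $M$ is diagonal: $\mathrm{Tr}(\mathfrak{C}(\mathcal{C}_{\mathrm{PP}},M)M^{-1})=\mathrm{Tr}(\mathfrak{C}(\mathcal{C}_{\mathrm{s}},M)M^{-1})\le(1+\frac1{\sqrt d})\mathrm{Tr}(\widetilde{\mathfrak{C}}(\mathcal{C}_{\mathrm{q}},M)M^{-1})$. (2) If $M$ has constant diagonal: $\widetilde{\mathfrak{C}}(\mathcal{C}_{\mathrm{q}},M)\preccurlyeq\mathfrak{C}(\mathcal{C}_{\mathrm{s}},M)$ and $\mathrm{Tr}(\mathfrak{C}(\mathcal{C}_{\mathrm{PP}},M)M^{-1})\le(1+\frac1{\sqrt d})\mathrm{Tr}(\widetilde{\mathfrak{C}}(\mathcal{C}_{\mathrm{q}},M)M^{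-1})$.
   Context: $\mathcal{C}_{\mathrm{q}}(z)=\|z\|\mathrm{sign}(z)\odot\chi$ with $\chi_i\sim\mathrm{Bern}(|z_i|/\|z\|)$ independent; $\mathcal{C}_{\mathrm{s}}(z)=\frac1pB\odot z$, $B_i$ i.i.d. $\mathrm{Bern}(p)$; $\mathcal{C}_{\mathrm{PP}}(z)=\frac{b_0}pz$, $b_0\sim\mathrm{Bern}(p)$. $\mathrm{Diag}(M)$ is the diagonal part of $M$ and its square root is entrywise. ($\widetilde{\mathfrak{C}}(\mathcal{C}_{\mathrm{q}},M)$ is an upper bound on the covariance of $\mathcal{C}_{\mathrm{q}}(E)$.) *)

(* Defs.v *)
From HB Require Import structures.
From mathcomp Require Import all_boot all_order all_algebra.
From mathcomp Require Import all_classical all_reals all_analysis.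
Set Implicit Arguments. Unset Strict Implicit. Unset Printing Implicit Defensive.
Import Order.TTheory GRing.Theory Num.Theory.
Local Open Scope ring_scope.

Section Defs.
Context {R : realType} {d : nat}.

Definition spd (M : 'M[R]_d) : Prop :=
  M^T = M /\ forall x : 'cV[R]_d, x != 0 -> 0 < (x^T *m M *m x) 0 0.

Definition loewner_le (A B : 'M[R]_d) : Prop :=
  forall x : 'cV[R]_d, 0 <= (x^T *m (B - A) *m x) 0 0.

Definition Diag (M : 'M[R]_d) : 'M[R]_d := diag_mx (\row_i M i i).
Definition sqrtDiag (M : 'M[R]_d) : 'M[R]_d := diag_mx (\row_i Num.sqrt (M i i)).

Definition tildeCq (M : 'M[R]_d) : 'M[R]_d :=
  M + Num.sqrt (\tr M) *: sqrtDiag M - Diag M.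

(** Compressors, given as (finite) randomness outcome -> map, with outcome law. *)
Definition CPP (p : R) (b0 : bool) (z : 'cV[R]_d) : 'cV[R]_d :=
  ((if b0 then 1 else 0) / p) *: z.
Definition wPP (p : R) (b0 : bool) : R := if b0 then p else 1 - p.
Definition Cs (p : R) (B : {ffun 'I_d -> bool}) (z : 'cV[R]_d) : 'cV[R]_d :=
  p^-1 *: \col_i ((if B i then 1 else 0) * z i 0).
Definition ws (p : R) (B : {ffun 'I_d -> bool}) : R :=
  \prod_i (if B i then p else 1 - p).

Definition comp_moment (Om : finType) (w : Om -> R)
    (C : Om -> 'cV[R]_d -> 'cV[R]_d) (z : 'cV[R]_d) : 'M[R]_d :=
  \sum_(o : Om) w o *: (C o z *m (C o z)^T).

Definition vecE {dT} {T : measurableType dT} (P : probability T R)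
    (X : 'I_d -> {RV P >-> R}) (t : T) : 'cV[R]_d := \col_i X i t.

Definition second_moment {dT} {T : measurableType dT} (P : probability T R)
    (X : 'I_d -> {RV P >-> R}) (M : 'M[R]_d) : Prop :=
  forall i j, P.-integrable setT (fun t => (X i t * X j t)%:E) /\
              ('E_P[fun t => (X i t * X j t)%R])%E = (M i j)%:E.

(** frakC(C, M) = E[C(E) C(E)^T], with E independent of the compression
    randomness: iterated expectation (outer over E, inner over compression). *)
Definition frakC {dT} {T : measurableType dT} (P : probability T R)
    (X : 'I_d -> {RV P >-> R}) (Om : finType) (w : Om -> R)
    (C : Om -> 'cV[R]_d -> 'cV[R]_d) : 'M[R]_d :=
  \matrix_(i, j) fine ('E_P[fun t => (comp_moment w C (vecE X t) i j)%R])%E.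

End Defs.

(* Main.v *)
Require Import Defs.
From HB Require Import structures.
From mathcomp Require Import all_boot all_order all_algebra.
From mathcomp Require Import all_classical all_reals all_analysis.
From mathcomp Require Import ring lra.
Import Order.TTheory GRing.Theory Num.Theory.
Local Open Scope ring_scope.

Section H.
Context {R : realType} {n : nat}.

Definition bf (x : R) (b : bool) : R := if b then x else 1 - x.

Lemma prod_if1 (i : 'I_n) (a : 'I_n -> R) :
  \prod_(k < n) (if k == i then a k else 1) = a i.
Proof.
rewrite (bigD1 i) //= eqxx big1 ?mulr1 // => k /negbTE -> //.
Qed.

Lemma ws_pair (p : R) (i j : 'I_n) :
  \sum_(B : {ffun 'I_n -> bool}) ws p B * ((if B i then 1 else 0) * (if B j then 1 else 0))
  = if i == j then p else p * p.
Proof.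
pose F := fun (k : 'I_n) (b : bool) =>
  bf p b * ((if k == i then (if b then 1 else 0) else 1) *
            (if k == j then (if b then 1 else 0) else 1)) : R.
transitivity (\sum_(f : {ffun 'I_n -> bool}) \prod_(k < n) F k (f k)).
  apply: eq_bigr => B _; rewrite /F /ws !big_split /=.
  rewrite (prod_if1 i (fun k => if B k then 1 else 0)).
  by rewrite (prod_if1 j (fun k => if B k then 1 else 0)).
rewrite -(bigA_distr_bigA F) /F.
have [<-|ij] := eqVneq i j.
  rewrite (eq_bigr (fun k => if k == i then p else 1)).
    by rewrite (prod_if1 i (fun=> p)).
  move=> k _; rewrite big_bool /bf /=.
  case: eqP => _; first by rewrite !mulr1 !mulr0 addr0.
  by rewrite !mulr1 addrC subrK.
rewrite (eq_bigr (fun k => (if k == i then p else 1) * (if k == j then p else 1))).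
  by rewrite big_split /= (prod_if1 i (fun=> p)) (prod_if1 j (fun=> p)).
move=> k _; rewrite big_bool /bf /=.
have [->|ki] := eqVneq k i.
  by rewrite (negbTE ij); ring.
by case: (k == j); ring.
Qed.


Lemma outer_entry (z : 'cV[R]_n) i j : (z *m z^T) i j = z i 0 * z j 0.
Proof. by rewrite !mxE big_ord1 !mxE. Qed.

Lemma CPP_entry (p : R) (z : 'cV[R]_n) i j : p != 0 ->
  comp_moment (wPP p) (CPP p) z i j = p^-1 * (z i 0 * z j 0).
Proof.
move=> p0; rewrite /comp_moment summxE big_bool /wPP /CPP /= !mxE.
rewrite !big_ord1 !mxE; by field.
Qed.

Lemma Cs_entry (p : R) (z : 'cV[R]_n) i j : p != 0 ->
  comp_moment (ws p) (Cs p) z i j =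
  (if i == j then p^-1 else 1) * (z i 0 * z j 0).
Proof.
move=> p0; rewrite /comp_moment summxE.
transitivity (\sum_(B : {ffun 'I_n -> bool}) ws p B *
   ((if B i then 1 else 0) * (if B j then 1 else 0)) * (p^-1 * p^-1 * (z i 0 * z j 0))).
  apply: eq_bigr => B _; rewrite /Cs !mxE big_ord1 !mxE; ring.
rewrite -mulr_suml ws_pair.
by case: eqP => _; field.
Qed.

Lemma spd_psd (M : 'M[R]_n) : spd M -> forall x : 'cV[R]_n, 0 <= (x^T *m M *m x) 0 0.
Proof.
move=> [_ hp] x; have [->|nz] := eqVneq x 0.
  by rewrite trmx0 !mul0mx mxE.
exact/ltW/hp.
Qed.

Lemma spd_pos (M : 'M[R]_n) i : spd M -> 0 < M i i.
Proof.
move=> [hs hp]; have := hp (delta_mx i 0).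
rewrite trmx_delta -rowE -colE !mxE.
apply.
apply/negP => /eqP/matrixP/(_ i 0); rewrite !mxE !eqxx /=.
by move/eqP; rewrite oner_eq0.
Qed.

Lemma spd_unit (M : 'M[R]_n) : spd M -> M \in unitmx.
Proof.
move=> [hs hp]; rewrite -row_free_unit -kermx_eq0.
apply/eqP/row_matrixP => r; apply/eqP; apply/negPn/negP => hr.
suff: (row r (kermx M))^T != 0.
  by move/hp; rewrite trmxK -row_mul mulmx_ker row0 mul0mx mxE ltxx.
apply: contra hr => /eqP h; rewrite row0.
by rewrite -[row r _]trmxK h trmx0.
Qed.

Lemma spd_key (M : 'M[R]_n) i : spd M -> 1 <= M i i * invmx M i i.
Proof.
move=> hM; have hu := spd_unit M hM; have hpsd := spd_psd M hM.
case: hM => hs hp.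
set N := invmx M; set e : 'cV[R]_n := delta_mx i 0; set u := N *m e.
have hMu : M *m u = e by rewrite /u mulmxA mulmxV // mul1mx.
have hC : u i 0 = N i i by rewrite /u /e -colE mxE.
clearbody u.
have huM : u^T *m M = e^T by rewrite -[M in u^T *m M]hs -trmx_mul hMu.
have hee : e^T *m e = 1 by rewrite /e trmx_delta mul_delta_mx; apply/matrixP => a b; rewrite !mxE !ord1.
have h1 : (e^T *m M *m e) 0 0 = M i i by rewrite /e trmx_delta -rowE -colE !mxE.
have h2 : (e^T *m M *m u) 0 0 = 1 by rewrite -mulmxA hMu hee mxE.
have h3 : (u^T *m M *m e) 0 0 = 1 by rewrite huM hee mxE.
have h4 : (u^T *m M *m u) 0 0 = N i i.
  by rewrite -mulmxA hMu /e -colE !mxE.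
have Cpos : 0 < N i i.
  rewrite -h4; apply: hp; apply/negP => /eqP u0.
  move: hMu; rewrite u0 mulmx0 => /matrixP/(_ i 0); rewrite /e !mxE !eqxx /=.
  by move/eqP; rewrite eq_sym oner_eq0.
set C := N i i in Cpos h4 hC *.
have E : (C *: e - u)^T *m M *m (C *: e - u) =
   (C * C) *: (e^T *m M *m e) - C *: (e^T *m M *m u) - C *: (u^T *m M *m e)
   + u^T *m M *m u.
  rewrite linearB linearZ /=.
  rewrite [(C *: e - u)^T]linearB /= [(C *: e)^T]linearZ /= !mulmxBl -!scalemxAl.
  move: (e^T *m M *m e) (e^T *m M *m u) (u^T *m M *m e) (u^T *m M *m u) => Q1 Q2 Q3 Q4.
  by apply/matrixP => a b; rewrite !mxE; ring.
have := hpsd (C *: e - u); rewrite E.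
move: h1 h2 h3 h4.
move: (e^T *m M *m e) (e^T *m M *m u) (u^T *m M *m e) (u^T *m M *m u) => Q1 Q2 Q3 Q4.
move=> h1 h2 h3 h4; rewrite !mxE h1 h2 h3 h4 => h.
nra.
Qed.

Lemma trB (A B : 'M[R]_n) : \tr (A - B) = \tr A - \tr B.
Proof. by rewrite /mxtrace -sumrB; apply: eq_bigr => i _; rewrite !mxE. Qed.

Lemma tr_diag_mul (r : 'rV[R]_n) (N : 'M[R]_n) :
  \tr (diag_mx r *m N) = \sum_i r 0 i * N i i.
Proof. by rewrite mul_diag_mx /mxtrace; apply: eq_bigr => i _; rewrite mxE. Qed.

Lemma AM_HM (a : 'I_n -> R) : (forall i, 0 < a i) ->
  n%:R * n%:R <= (\sum_i a i) * (\sum_i (a i)^-1).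
Proof.
move=> ha.
rewrite mulr_suml.
have -> : \sum_i a i * (\sum_j (a j)^-1) = \sum_i \sum_j a i * (a j)^-1.
  by apply: eq_bigr => i _; rewrite mulr_sumr.
set T := \sum_i \sum_j _.
have hT : T = \sum_i \sum_j a j * (a i)^-1 by rewrite /T exchange_big.
have h2 : 2 * T = \sum_(i < n) \sum_(j < n) (a i * (a j)^-1 + a j * (a i)^-1).
  rewrite mulr2n mulrDl mul1r {1}/T {1}hT -big_split /=.
  by apply: eq_bigr => i _; rewrite -big_split.
have : \sum_(i < n) \sum_(j < n) (2 : R) <= 2 * T.
  rewrite h2; apply: ler_sum => i _; apply: ler_sum => j _.
  have ai := ha i; have aj := ha j.
  have -> : a i * (a j)^-1 + a j * (a i)^-1 = 2 + (a i - a j) ^+ 2 / (a i * a j).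
    by field; apply/andP; split; apply: lt0r_neq0.
  by rewrite lerDl; apply: divr_ge0; [exact: sqr_ge0 | apply: mulr_ge0; exact: ltW].
rewrite (eq_bigr (fun _ => (2 : R) *+ n)); last by move=> i _; rewrite sumr_const card_ord.
rewrite sumr_const card_ord => h.
have : 2 * (n%:R * n%:R) <= 2 * T by rewrite -natrM mulr_natr mulrnA.
by rewrite ler_pM2l.
Qed.

Lemma CS_sum (a : 'I_n -> R) :
  (\sum_i a i) ^+ 2 <= n%:R * \sum_i a i ^+ 2.
Proof.
set S := \sum_i a i ^+ 2.
have hA : (\sum_i a i) ^+ 2 = \sum_(i < n) \sum_(j < n) a i * a j.
  by rewrite expr2 mulr_suml; apply: eq_bigr => i _; rewrite mulr_sumr.
have hS1 : \sum_(i < n) \sum_(j < n) a i ^+ 2 = n%:R * S.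
  rewrite /S mulr_sumr; apply: eq_bigr => i _; rewrite sumr_const card_ord.
  by rewrite mulr_natl.
have hS2 : \sum_(i < n) \sum_(j < n) a j ^+ 2 = n%:R * S.
  rewrite /S (eq_bigr (fun _ => S)) // sumr_const card_ord.
  by rewrite mulr_natl.
have : 2 * (\sum_i a i) ^+ 2 <= 2 * (n%:R * S).
  rewrite hA mulr_sumr.
  have -> : 2 * (n%:R * S) = \sum_(i < n) \sum_(j < n) (a i ^+ 2 + a j ^+ 2).
    by rewrite mulr2n mulrDl mul1r -{1}hS1 -hS2 -big_split; apply: eq_bigr => i _; rewrite -big_split.
  apply: ler_sum => i _; rewrite mulr_sumr; apply: ler_sum => j _.
  rewrite -subr_ge0.
  have -> : a i ^+ 2 + a j ^+ 2 - 2 * (a i * a j) = (a i - a j) ^+ 2 by ring.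
  exact: sqr_ge0.
by rewrite ler_pM2l.
Qed.

Lemma ineq1 (a : 'I_n -> R) : (forall i, 0 < a i) ->
  n%:R * Num.sqrt n%:R <= Num.sqrt (\sum_i a i ^+ 2) * \sum_i (a i)^-1.
Proof.
move=> ha.
set s := Num.sqrt (n%:R : R); set Q := Num.sqrt _; set H := \sum_i _.
set A := \sum_i a i.
have s0 : 0 <= s := sqrtr_ge0 _.
have ss : s * s = n%:R by rewrite -expr2 sqr_sqrtr ?ler0n.
have H0 : 0 <= H by apply: sumr_ge0 => i _; rewrite invr_ge0; exact: ltW.
have A0 : 0 <= A by apply: sumr_ge0 => i _; exact: ltW.
have hAH := AM_HM a ha; rewrite -/A -/H in hAH.
have hA : A <= s * Q.
  rewrite /s /Q -sqrtrM ?ler0n // -(ger0_norm A0) -sqrtr_sqr ler_sqrt.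
    exact: CS_sum.
  by apply: mulr_ge0; [exact: ler0n | apply: sumr_ge0 => i _; exact: sqr_ge0].
have h1 : s * (s * n%:R) <= s * (Q * H).
  rewrite mulrA ss mulrA; apply: le_trans hAH _.
  by apply: ler_wpM2r.
have [s00|sp] := eqVneq s 0.
  have n0 : (n%:R : R) = 0 by rewrite -ss s00 mulr0.
  by rewrite n0 mul0r; apply: mulr_ge0 => //; exact: sqrtr_ge0.
have sp' : 0 < s by rewrite lt_def sp s0.
by rewrite mulrC -(ler_pM2l sp').
Qed.

End H.

Section E.
Context {R : realType} {n : nat} {dT : measure_display} {T : measurableType dT}.
Variable (P : probability T R).

Lemma E_scale (f : T -> R) (k : R) :
  P.-integrable setT (fun t => (f t)%:E) ->
  ('E_P[fun t => (k * f t)%R] = k%:E * 'E_P[f])%E.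
Proof.
move=> hf; rewrite !unlock.
under eq_integral do rewrite EFinM.
exact: integralZl.
Qed.

Lemma frakC_entry (X : 'I_n -> {RV P >-> R}) (M : 'M[R]_n) (Om : finType)
  (w : Om -> R) (C : Om -> 'cV[R]_n -> 'cV[R]_n) (K : 'I_n -> 'I_n -> R) :
  second_moment X M ->
  (forall z i j, comp_moment w C z i j = K i j * (z i 0 * z j 0)) ->
  forall i j, frakC X w C i j = K i j * M i j.
Proof.
move=> hM hC i j; rewrite /frakC mxE.
have -> : (fun t => comp_moment w C (vecE X t) i j) =
          (fun t => K i j * (X i t * X j t)).
  by apply/funext => t; rewrite hC /vecE !mxE.
have [hi he] := hM i j.
by rewrite E_scale // he.
Qed.

End E.

Theorem proposition4 (R : realType) (d : nat) (dT : measure_display)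
    (T : measurableType dT) (P : probability T R)
    (M : 'M[R]_d) (X : 'I_d -> {RV P >-> R}) :
  (2 <= d)%N -> spd M -> second_moment X M ->
  let p := (Num.sqrt (d%:R : R) + 1)^-1 in
  let CPPM := frakC X (wPP p) (CPP p) in
  let CsM := frakC X (ws p) (Cs p) in
  let CqM := tildeCq M in
  (is_diag_mx M ->
     \tr (CPPM *m invmx M) = \tr (CsM *m invmx M) /\
     \tr (CsM *m invmx M)
       <= (1 + (Num.sqrt (d%:R : R))^-1) * \tr (CqM *m invmx M)) /\
  ((exists c : R, forall i, M i i = c) ->
     loewner_le CqM CsM /\
     \tr (CPPM *m invmx M)
       <= (1 + (Num.sqrt (d%:R : R))^-1) * \tr (CqM *m invmx M)).
Proof.
move=> hd hM h2 p CPPM CsM CqM.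
set s := Num.sqrt (d%:R : R).
have d0 : (0 < d)%N by apply: leq_trans hd.
have s1 : 1 <= s.
  by rewrite /s -[X in X <= _]sqrtr1 ler_sqrt ?ler0n // ler1n.
have s0 : 0 < s by apply: lt_le_trans s1.
have ss : s * s = d%:R by rewrite -expr2 sqr_sqrtr ?ler0n.
have hp0 : p != 0 by rewrite invr_eq0; apply: lt0r_neq0; apply: addr_gt0.
have hpi : p^-1 = s + 1 by rewrite invrK.
have hu := spd_unit M hM.
set N := invmx M.
have hCPP : forall i j, CPPM i j = p^-1 * M i j.
  exact: (@frakC_entry R d dT T P X M _ (wPP p) (CPP p) (fun _ _ => p^-1) h2
            (fun z k l => CPP_entry p z k l hp0)).
have hCs : forall i j, CsM i j = (if i == j then p^-1 else 1) * M i j.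
  exact: (@frakC_entry R d dT T P X M _ (ws p) (Cs p)
            (fun k l => if k == l then p^-1 else 1) h2
            (fun z k l => Cs_entry p z k l hp0)).
have trCPP : \tr (CPPM *m N) = (s + 1) * d%:R.
  have -> : CPPM = (s + 1) *: M by apply/matrixP => i j; rewrite hCPP mxE hpi.
  by rewrite -scalemxAl mxtraceZ mulmxV // mxtrace1.
have trMN : \tr (M *m N) = d%:R by rewrite mulmxV // mxtrace1.
have trCs : \tr (CsM *m N) = d%:R + s * \sum_i M i i * N i i.
  have -> : CsM = M + s *: Diag M.
    apply/matrixP => i j; rewrite hCs !mxE hpi.
    have [->|ij] := eqVneq i j; first by rewrite mulr1n; ring.
    by rewrite mulr0n; ring.
  by rewrite mulmxDl mxtraceD -scalemxAl mxtraceZ trMN tr_diag_mul; congr (_ + _ * _); apply: eq_bigr => i _; rewrite mxE.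
have trCq : \tr (CqM *m N) = d%:R + Num.sqrt (\tr M) * (\sum_i Num.sqrt (M i i) * N i i)
                             - \sum_i M i i * N i i.
  rewrite /CqM /tildeCq mulmxBl mulmxDl trB mxtraceD -scalemxAl mxtraceZ trMN.
  rewrite /sqrtDiag /Diag !tr_diag_mul.
  by congr (_ + _ * _ - _); apply: eq_bigr => i _; rewrite mxE.
clearbody CsM CPPM.
split.
  move=> hdiag.
  have hd1 : forall i, M i i * N i i = 1.
    move=> i; case/diag_mxP: hdiag => r hr.
    have /matrixP/(_ i i) := mulmxV hu; rewrite -/N.
    rewrite {1}hr mul_diag_mx !mxE eqxx mulr1n => <-.
    by rewrite hr mxE eqxx mulr1n.
  have hsum1 : \sum_(i < d) M i i * N i i = d%:R.
    by rewrite (eq_bigr (fun _ => 1)) // sumr_const card_ord.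
  rewrite trCPP trCs hsum1; split; first by ring.
  rewrite trCq hsum1.
  set a := fun i => Num.sqrt (M i i).
  have ha : forall i, 0 < a i by move=> i; rewrite /a sqrtr_gt0; exact: spd_pos.
  have hMa : forall i, M i i = a i ^+ 2 by move=> i; rewrite /a sqr_sqrtr // ltW // spd_pos.
  have htr : \tr M = \sum_i a i ^+ 2 by rewrite /mxtrace; apply: eq_bigr => i _; rewrite hMa.
  have hinv : forall i, Num.sqrt (M i i) * N i i = (a i)^-1.
    move=> i; have h := hd1 i; rewrite hMa in h.
    have a0 : a i != 0 := lt0r_neq0 (ha i).
    have -> : N i i = (a i ^+ 2)^-1.
      by apply: (mulfI (expf_neq0 2 a0)); rewrite h mulfV // expf_neq0.
    change (Num.sqrt (M i i)) with (a i).
    by field.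
  rewrite (eq_bigr (fun i => (a i)^-1)); last by move=> i _; rewrite hinv.
  rewrite htr.
  have := ineq1 a ha; rewrite -/s => hI.
  have -> : d%:R + s * d%:R = (1 + s^-1) * (d%:R * s).
    by field; apply: lt0r_neq0.
  have -> : d%:R + Num.sqrt (\sum_i a i ^+ 2) * \sum_i (a i)^-1 - d%:R
            = Num.sqrt (\sum_i a i ^+ 2) * \sum_i (a i)^-1 by ring.
  apply: ler_wpM2l => //.
  by apply: addr_ge0 => //; rewrite invr_ge0 ltW.
case=> c hc.
pose i0 := Ordinal d0.
have c0 : 0 < c by rewrite -(hc i0); exact: spd_pos.
have htr : \tr M = d%:R * c.
  by rewrite /mxtrace (eq_bigr (fun _ => c)) // sumr_const card_ord mulr_natl.
have hsq : Num.sqrt (\tr M) * Num.sqrt c = s * c.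
  by rewrite htr sqrtrM ?ler0n // -mulrA -expr2 sqr_sqrtr // ltW.
split.
  rewrite /loewner_le; have -> : CsM - CqM = c%:M.
    apply/matrixP => i j; rewrite /CqM /tildeCq /sqrtDiag /Diag !mxE hCs hpi !hc.
    have [->|ij] := eqVneq i j.
      rewrite !mulr1n hc.
      by rewrite hsq; ring.
    by rewrite !mulr0n; ring.
  move=> x; rewrite mul_mx_scalar -scalemxAl mxE.
  apply: mulr_ge0; first exact: ltW.
  rewrite mxE; apply: sumr_ge0 => k _; rewrite !mxE -expr2; exact: sqr_ge0.
rewrite trCPP trCq.
set U := \sum_(i < d) N i i.
have e1 : \sum_i Num.sqrt (M i i) * N i i = Num.sqrt c * U.
  by rewrite /U mulr_sumr; apply: eq_bigr => i _; rewrite hc.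
have e2 : \sum_i M i i * N i i = c * U.
  by rewrite /U mulr_sumr; apply: eq_bigr => i _; rewrite hc.
have hX : d%:R <= c * U.
  have -> : (d%:R : R) = \sum_(i < d) (1 : R) by rewrite sumr_const card_ord.
  rewrite -e2.
  by apply: ler_sum => i _; exact: spd_key.
rewrite e1 e2 mulrA hsq.
have -> : d%:R + s * c * U - c * U = d%:R + (s - 1) * (c * U) by ring.
have hle : d%:R + (s - 1) * d%:R <= d%:R + (s - 1) * (c * U).
  by rewrite lerD2l; apply: ler_wpM2l => //; rewrite subr_ge0.
have hpos : 0 <= 1 + s^-1 by apply: addr_ge0 => //; rewrite invr_ge0 ltW.
apply: le_trans (ler_wpM2l hpos hle).
rewrite le_eqVlt; apply/orP; left; apply/eqP.
by field; apply: lt0r_neq0.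
Qed.
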